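(* Let $A \subset \mathbb{Z}^d$ consist of exactly $d+2$ points, contain $0$, and generate $\mathbb{Z}^d$ additively. Denote the nonzero elements of $A$ by $v_0, v_1, \ldots, v_d$, where $v_1, \ldots, v_d$ are linearly independent. For integers $k$ let $C_k = \{\sum_{i=1}^d n_i v_i : n_i \in \mathbb{N}, \ \sum_{i=1}^d n_i \leq k\}$, with $C_k := \emptyset$ for $k < 0$, and for integers $j, h \geq 0$ let $A_{j,h} = j v_0 + C_{h-j}$. Let $\Gamma = \mathrm{span}_{\mathbb{N}}\{v_1,\ldots,v_d\}$, let $N$ be the order of $v_0$ in $\mathbb{Z}^d / \mathrm{span}_{\mathbb{Z}}\{v_1,\ldots,v_d\}$, and let $w \in \Gamma$ be the point with $\Gamma \cap (N v_0 + \Gamma) = w + \Gamma$ (explicitly, if $N v_0 = \sum_{i=1}^d c_i v_i$ with $c_i \in \mathbb{Z}$, then $w = \sum_{i=1}^d \max(c_i,0) v_i$). Let \[ H = \max\{\ell : A_{j,h} \cap A_{j',h} = \emptyset \text{ whenever } j \neq j' \text{ and } h < \ell\}, \] which is a finite integer. Then for all $a, j, h \in \mathbb{N}$, \[ A_{j,h} \cap A_{j+aN,h} = j v_0 + a w + C_{h - j - aH}. \]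
   Context: $\mathbb{N} = \{0,1,2,\ldots\}$; in the definition of $H$, $j,j',h$ range over nonnegative integers. For a vector $x$ and set $S$, $x + S = \{x + s : s \in S\}$. *)

(* Defs.v *)
From mathcomp Require Import all_boot all_order all_algebra.
Set Implicit Arguments. Unset Strict Implicit. Unset Printing Implicit Defensive.
Import Order.TTheory GRing.Theory Num.Theory.
Local Open Scope ring_scope.

Section Defs.
Variable d : nat.

Definition in_Zspan (vs : 'I_d -> 'rV[int]_d) (x : 'rV[int]_d) : Prop :=
  exists c : 'I_d -> int, x = \sum_i c i *: vs i.

Definition in_Gamma (vs : 'I_d -> 'rV[int]_d) (x : 'rV[int]_d) : Prop :=
  exists n : 'I_d -> nat, x = \sum_i (n i)%:Z *: vs i.

Definition in_C (vs : 'I_d -> 'rV[int]_d) (k : int) (x : 'rV[int]_d) : Prop :=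
  exists n : 'I_d -> nat, (\sum_i (n i)%:Z <= k) /\ x = \sum_i (n i)%:Z *: vs i.

Definition in_A (v0 : 'rV[int]_d) (vs : 'I_d -> 'rV[int]_d) (j h : nat) (x : 'rV[int]_d) : Prop :=
  exists y : 'rV[int]_d, in_C vs (h%:Z - j%:Z) y /\ x = v0 *+ j + y.

Definition lin_indep (vs : 'I_d -> 'rV[int]_d) : Prop :=
  forall c : 'I_d -> int, \sum_i c i *: vs i = 0 -> forall i, c i = 0.

Definition generates (v0 : 'rV[int]_d) (vs : 'I_d -> 'rV[int]_d) : Prop :=
  forall x : 'rV[int]_d, exists (c0 : int) (c : 'I_d -> int), x = c0 *: v0 + \sum_i c i *: vs i.

Definition is_order_mod (v0 : 'rV[int]_d) (vs : 'I_d -> 'rV[int]_d) (N : nat) : Prop :=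
  (0 < N)%N /\ in_Zspan vs (v0 *+ N) /\
  forall m : nat, (0 < m < N)%N -> ~ in_Zspan vs (v0 *+ m).

Definition is_w (v0 : 'rV[int]_d) (vs : 'I_d -> 'rV[int]_d) (N : nat) (w : 'rV[int]_d) : Prop :=
  in_Gamma vs w /\
  forall x : 'rV[int]_d, (in_Gamma vs x /\ exists y : 'rV[int]_d, in_Gamma vs y /\ x = v0 *+ N + y) <->
            (exists y : 'rV[int]_d, in_Gamma vs y /\ x = w + y).

Definition disjoint_below (v0 : 'rV[int]_d) (vs : 'I_d -> 'rV[int]_d) (l : int) : Prop :=
  forall j j' h : nat, j <> j' -> h%:Z < l ->
    forall x : 'rV[int]_d, ~ (in_A v0 vs j h x /\ in_A v0 vs j' h x).

Definition is_H (v0 : 'rV[int]_d) (vs : 'I_d -> 'rV[int]_d) (H : int) : Prop :=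
  disjoint_below v0 vs H /\ forall l : int, disjoint_below v0 vs l -> l <= H.

End Defs.

(* Main.v *)
Require Import Defs.
From mathcomp Require Import all_boot all_order all_algebra.
From mathcomp Require Import zify ring.
Import Order.TTheory GRing.Theory Num.Theory.
Set Implicit Arguments. Unset Strict Implicit. Unset Printing Implicit Defensive.
Local Open Scope ring_scope.
Definition lc d (vs : 'I_d -> 'rV[int]_d) (f : 'I_d -> int) := \sum_i f i *: vs i.
Definition Ssum d (f : 'I_d -> int) := \sum_i f i.

Lemma lcD d (vs : 'I_d -> 'rV[int]_d) (f g : 'I_d -> int) : lc vs (fun i => f i + g i) = lc vs f + lc vs g.
Proof. rewrite /lc -big_split /=; apply: eq_bigr => i _; exact: scalerDl. Qed.
Lemma lcN d (vs : 'I_d -> 'rV[int]_d) (f : 'I_d -> int) : lc vs (fun i => - f i) = - lc vs f.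
Proof. rewrite /lc -sumrN; apply: eq_bigr => i _; exact: scaleNr. Qed.
Lemma lcM d (vs : 'I_d -> 'rV[int]_d) k (f : 'I_d -> int) : lc vs (fun i => k * f i) = k *: lc vs f.
Proof. rewrite /lc scaler_sumr; apply: eq_bigr => i _; by rewrite scalerA. Qed.
Lemma lc_ext d (vs : 'I_d -> 'rV[int]_d) (f g : 'I_d -> int) : (forall i, f i = g i) -> lc vs f = lc vs g.
Proof. by move=> E; apply: eq_bigr => i _; rewrite E. Qed.
Lemma lc0 d (vs : 'I_d -> 'rV[int]_d) : lc vs (fun _ => 0) = 0.
Proof. by apply: big1 => i _; rewrite scale0r. Qed.
Lemma lc_inj d (vs : 'I_d -> 'rV[int]_d) (hind : lin_indep vs) (f g : 'I_d -> int) :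
  lc vs f = lc vs g -> forall i, f i = g i.
Proof.
move=> E i; apply/eqP; rewrite -subr_eq0; apply/eqP.
apply: (hind (fun i => f i - g i)).
change (lc vs (fun i => f i + (fun i => - g i) i) = 0).
by rewrite lcD lcN E subrr.
Qed.
Lemma SD d (f g : 'I_d -> int) : Ssum (fun i => f i + g i) = Ssum f + Ssum g.
Proof. by rewrite /Ssum big_split. Qed.
Lemma SN d (f : 'I_d -> int) : Ssum (fun i => - f i) = - Ssum f.
Proof. by rewrite /Ssum sumrN. Qed.
Lemma SM d k (f : 'I_d -> int) : Ssum (fun i => k * f i) = k * Ssum f.
Proof. by rewrite /Ssum mulr_sumr. Qed.
Lemma S_ge0 d (f : 'I_d -> int) : (forall i, 0 <= f i) -> 0 <= Ssum f.
Proof. by move=> h; apply: sumr_ge0 => i _. Qed.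
Lemma S_le d (f g : 'I_d -> int) : (forall i, f i <= g i) -> Ssum f <= Ssum g.
Proof. by move=> h; apply: ler_sum => i _. Qed.

Lemma in_CE d (vs : 'I_d -> 'rV[int]_d) k y : in_C vs k y <->
  exists m, (forall i, 0 <= m i) /\ Ssum m <= k /\ y = lc vs m.
Proof.
split.
  move=> [n [h1 h2]]; exists (fun i => (n i)%:Z); split=> //.
- move=> [m [m0 [h1 h2]]]; exists (fun i => absz (m i)).
  have E : forall i, ((absz (m i))%:Z) = m i by move=> i; rewrite gez0_abs.
  split.
    by rewrite (eq_bigr m (fun i _ => E i)).
  by rewrite h2; apply: eq_bigr => i _; rewrite E.
Qed.

Lemma natscale d (v : 'rV[int]_d) (a : nat) : v *+ a = a%:Z *: v.
Proof.
elim: a => [|a IH]; first by rewrite mulr0n scale0r.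
by rewrite mulrS IH intS scalerDl scale1r.
Qed.

Definition pos (z : int) := if 0 <= z then z else 0.
Lemma vmul d (v0 : 'rV[int]_d) vs N c (hc : v0 *+ N = lc vs c) (j a : nat) :
  v0 *+ (j + a * N) = v0 *+ j + lc vs (fun i => a%:Z * c i).
Proof. by rewrite mulrnDr (mulnC a) mulrnA hc (natscale (lc vs c)) lcM. Qed.

Definition cpf d (c : 'I_d -> int) := fun i => pos (c i).
Definition cnf d (c : 'I_d -> int) := fun i => pos (c i) - c i.
Definition H0f d (c : 'I_d -> int) (N : nat) :=
  if Ssum (cpf c) <= Ssum (cnf c) + N%:Z then Ssum (cnf c) + N%:Z else Ssum (cpf c).

Lemma cp_facts d (c : 'I_d -> int) :
  (forall i, cpf c i = cnf c i + c i) /\ (forall i, 0 <= cpf c i) /\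
  (forall i, c i <= cpf c i) /\ (forall i, 0 <= cnf c i).
Proof.
rewrite /cnf /cpf /pos; split; [|split; [|split]] => i; try lia;
  case: ifP => hci; lia.
Qed.

Lemma H0_facts d (c : 'I_d -> int) N :
  Ssum (cpf c) <= H0f c N /\ Ssum (cnf c) + N%:Z <= H0f c N /\
  (H0f c N = Ssum (cpf c) \/ H0f c N = Ssum (cnf c) + N%:Z) /\
  0 <= Ssum (cpf c) /\ 0 <= Ssum (cnf c).
Proof.
have [_ [cp0 [_ cn0]]] := cp_facts c.
have := S_ge0 cp0; have := S_ge0 cn0.
rewrite /H0f; case: ifP => hh; lia.
Qed.

Lemma core d (v0 : 'rV[int]_d) vs (hind : lin_indep vs) N c (hc : v0 *+ N = lc vs c)
  (a j h : nat) x :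
  (in_A v0 vs j h x /\ in_A v0 vs (j + a * N) h x) <->
  exists m, (forall i, 0 <= m i) /\ Ssum m <= h%:Z - j%:Z - a%:Z * H0f c N /\
     x = v0 *+ j + lc vs (fun i => a%:Z * cpf c i) + lc vs m.
Proof.
have [H0a [H0b [H0c [Scp Scn]]]] := H0_facts c N.
have [cpE [cp0 [cpc cn0]]] := cp_facts c.
set cp := cpf c in H0a H0c Scp cpE cp0 cpc *. set cn := cnf c in H0b H0c Scn cpE cn0 *.
set H0 := H0f c N in H0a H0b H0c *.
split.
- move=> [[y1 [/in_CE [n1 [n1p [n1S ->]]] ->]] [y2 [/in_CE [n2 [n2p [n2S ->]]] E]]].
  rewrite (vmul hc) -addrA in E; move/addrI: E; rewrite -lcD => /(lc_inj hind) E.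
  exists (fun i => n1 i - a%:Z * cp i); split; [|split].
  + move=> i; have h1 := n1p i; have h2 := n2p i; have e := E i;
    rewrite /cp /cpf /pos; case: ifP => hci; nia.
  + have -> : Ssum (fun i => n1 i - a%:Z * cp i) = Ssum n1 - a%:Z * Ssum cp.
      by rewrite SD SN SM.
    have e2 : Ssum n1 = Ssum n2 + a%:Z * Ssum cp - a%:Z * Ssum cn.
      rewrite -!SM -SN -!SD /Ssum; apply: eq_bigr => i _; rewrite E cpE; ring.
    case: H0c => ->; nia.
  + rewrite -addrA -lcD; congr (_ + _); apply: lc_ext => i; ring.
- move=> [m [m0 [mS ->]]]; split.
  + exists (lc vs (fun i => a%:Z * cp i + m i)); split; last by rewrite lcD addrA.
    apply/in_CE; exists (fun i => a%:Z * cp i + m i); split; [|split=>//].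
      by move=> i; have := cp0 i; have := m0 i; nia.
    rewrite SD SM; nia.
  + exists (lc vs (fun i => a%:Z * cn i + m i)); split.
      apply/in_CE; exists (fun i => a%:Z * cn i + m i); split; [|split=>//].
        by move=> i; have := cn0 i; have := m0 i; nia.
      rewrite SD SM; nia.
    rewrite (vmul hc) -!addrA -!lcD; congr (_ + _); apply: lc_ext => i.
    rewrite cpE; ring.
Qed.
Lemma in_GammaE d (vs : 'I_d -> 'rV[int]_d) y : in_Gamma vs y <->
  exists m, (forall i, 0 <= m i) /\ y = lc vs m.
Proof.
split.
  by move=> [n h]; exists (fun i => (n i)%:Z); split.
- move=> [m [m0 h]]; exists (fun i => absz (m i)).
  have E : forall i, ((absz (m i))%:Z) = m i by move=> i; rewrite gez0_abs.
  by rewrite h; apply: eq_bigr => i _; rewrite E.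
Qed.

Lemma w_eq d (v0 : 'rV[int]_d) vs (hind : lin_indep vs) N c (hc : v0 *+ N = lc vs c) w
  (hw : is_w v0 vs N w) : w = lc vs (cpf c).
Proof.
have [cpE [cp0 [cpc cn0]]] := cp_facts c.
case: hw => /in_GammaE [nw [nw0 ->]] hiff.
have [_ [y [/in_GammaE [ny [ny0 ->]] E1]]] : in_Gamma vs (lc vs nw) /\
   exists y, in_Gamma vs y /\ lc vs nw = v0 *+ N + y.
  apply/hiff; exists 0; split; last by rewrite addr0.
  by apply/in_GammaE; exists (fun _ => 0); split=> //; rewrite lc0.
rewrite hc -lcD in E1; have {}E1 := lc_inj hind E1.
have [y2 [/in_GammaE [nz [nz0 ->]] E2]] : exists y, in_Gamma vs y /\ lc vs (cpf c) = lc vs nw + y.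
  apply/hiff; split; first by apply/in_GammaE; exists (cpf c).
  exists (lc vs (cnf c)); split; first by apply/in_GammaE; exists (cnf c).
  by rewrite hc -lcD; apply: lc_ext => i; rewrite cpE addrC.
rewrite -lcD in E2; have {}E2 := lc_inj hind E2.
apply: lc_ext => i; have := E1 i; have := E2 i; have := nw0 i; have := ny0 i; have := nz0 i.
rewrite /cpf /pos; case: ifP => hci; lia.
Qed.

Lemma key d (v0 : 'rV[int]_d) vs (hind : lin_indep vs) N c (hc : v0 *+ N = lc vs c)
  (hN0 : (0 < N)%N) (hmin : forall m : nat, (0 < m < N)%N -> ~ in_Zspan vs (v0 *+ m))
  j1 j2 h1 x : (j1 < j2)%N -> in_A v0 vs j1 h1 x -> in_A v0 vs j2 h1 x -> H0f c N <= h1%:Z.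
Proof.
move=> lt12 [y1 [/in_CE [n1 [n1p [n1S ->]]] E1]] [y2 [/in_CE [n2 [n2p [n2S ->]]] E2]].
set k := (j2 - j1)%N.
have hj2 : j2 = (j1 + k)%N by rewrite /k; lia.
have Ek : v0 *+ k = lc vs (fun i => n1 i - n2 i).
  rewrite lcD lcN; apply/eqP; rewrite eq_sym subr_eq; apply/eqP.
  apply: (@addrI _ (v0 *+ j1)); rewrite -E1 E2 hj2 mulrnDr; by rewrite addrA.
have hk := divn_eq k N.
set q := (k %/ N)%N in hk. set r := (k %% N)%N in hk.
have r0 : r = 0%N.
  apply/eqP; apply: contraT; rewrite -lt0n => r0.
  have rN : (r < N)%N by rewrite /r ltn_mod.
  exfalso; apply: (hmin r); first by rewrite r0 rN.
  exists (fun i => (n1 i - n2 i) - q%:Z * c i).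
  change (v0 *+ r = lc vs (fun i => (n1 i - n2 i) + - (q%:Z * c i))).
  rewrite lcD lcN lcM -(natscale (lc vs c)) -hc -mulrnA -Ek hk mulnC addnC mulrnDr.
  by rewrite addrK.
have hj2' : j2 = (j1 + q * N)%N by rewrite hj2 hk r0 addn0.
have q1 : (0 < q)%N.
  rewrite lt0n; apply/eqP => q0; move: hj2'; rewrite q0 mul0n addn0 => e; lia.
rewrite hj2' in E2.
have [m [m0 [mS _]]] : exists m, (forall i, 0 <= m i) /\ Ssum m <= h1%:Z - j1%:Z - q%:Z * H0f c N /\
     v0 *+ j1 + lc vs n1 = v0 *+ j1 + lc vs (fun i => q%:Z * cpf c i) + lc vs m.
  apply/(core hind hc); split.
    by exists (lc vs n1); split=> //; apply/in_CE; exists n1.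
  exists (lc vs n2); split; last by rewrite -E1 E2.
  by apply/in_CE; exists n2; split=> //; split=> //; rewrite -hj2'.
have [H0a [H0b [H0c [Scp Scn]]]] := H0_facts c N.
have := S_ge0 m0; nia.
Qed.

Lemma H_eq d (v0 : 'rV[int]_d) vs (hind : lin_indep vs) N c (hc : v0 *+ N = lc vs c)
  (hN0 : (0 < N)%N) (hmin : forall m : nat, (0 < m < N)%N -> ~ in_Zspan vs (v0 *+ m))
  H (hH : is_H v0 vs H) : H = H0f c N.
Proof.
have [H0a [H0b [H0c [Scp Scn]]]] := H0_facts c N.
case: hH => hdisj hmax.
apply/eqP; rewrite eq_le; apply/andP; split; last first.
  apply: hmax => j1 j2 h1 hne hlt x' [A1 A2].
  case: (ltngtP j1 j2) => [l|l|e]; last by apply: hne.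
    by have := key hind hc hN0 hmin l A1 A2; lia.
  by have := key hind hc hN0 hmin l A2 A1; lia.
rewrite leNgt; apply/negP => lt.
have H00 : 0 <= H0f c N by lia.
apply: (hdisj 0%N N (absz (H0f c N)) _ _ (lc vs (cpf c))).
- by move=> e; rewrite -e in hN0.
- by rewrite gez0_abs.
- have := proj2 (core hind hc 1 0 (absz (H0f c N)) (lc vs (cpf c))).
  rewrite add0n mul1n; apply; exists (fun _ => 0); split=> //; split.
    have -> : Ssum (fun _ : 'I_d => (0 : int)) = 0 by rewrite /Ssum big1.
    rewrite gez0_abs //; lia.
  rewrite lc0 addr0 mulr0n add0r; apply: lc_ext => i; by rewrite mul1r.
Qed.

Theorem lemma6p2 (d : nat) (v0 : 'rV[int]_d) (vs : 'I_d -> 'rV[int]_d)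
  (* A = {0, v0, v_1, ..., v_d} has exactly d+2 points *)
  (hv0 : v0 != 0) (hvs0 : forall i, vs i != 0) (hv0vs : forall i, v0 != vs i)
  (hinj : injective vs)
  (hgen : generates v0 vs) (hind : lin_indep vs)
  (N : nat) (hN : is_order_mod v0 vs N)
  (w : 'rV[int]_d) (hw : is_w v0 vs N w)
  (H : int) (hH : is_H v0 vs H) :
  forall (a j h : nat) (x : 'rV[int]_d),
    (in_A v0 vs j h x /\ in_A v0 vs (j + a * N) h x) <->
    (exists y, in_C vs (h%:Z - j%:Z - a%:Z * H) y /\ x = v0 *+ j + w *+ a + y).
Proof.
move=> a j h x.
case: hN => hN0 [[c hc] hmin].
have hc' : v0 *+ N = lc vs c := hc.
have -> := w_eq hind hc' hw.
have -> := H_eq hind hc' hN0 hmin hH.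
rewrite (core hind hc'); split.
  move=> [m [m0 [mS ->]]]; exists (lc vs m); split; first by apply/in_CE; exists m.
  by rewrite (natscale (lc vs (cpf c))) -lcM.
move=> [y [/in_CE [m [m0 [mS ->]]] ->]]; exists m; split=> //; split=> //.
by rewrite (natscale (lc vs (cpf c))) -lcM.
Qed.
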